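(* Let $k$ be an algebraically closed field of characteristic zero and let $G=N\rtimes H$ be a finite group with normal subgroup $N$ and complement $H$, so that $(G,H,N)$ is a factorized group. Then the bismash product $k^H\# kN$ is isomorphic as a $k$-algebra to the group algebra $k(\mathbb Z_{|H|}\times N)$.
   Context: A factorized group $(G,L,F)$ is a finite group $G$ with subgroups $L,F$ such that $L\cap F=1$ and $G=LF$; each $lf$ ($l\in L$, $f\in F$) is uniquely $({}^{[l]}f)(l^{[f]})$ with ${}^{[l]}f\in F$, $l^{[f]}\in L$. The bismash product $k^L\# kF$ is the algebra with basis $l\# f$ ($l\in L$, $f\in F$) and multiplication $(l\# f)(\bar l\#\bar f)=\delta_{l^{[f]},\bar l}\, l\#(f\bar f)$, unit $\sum_{l} l\#1$. Here $L=H$ and $F=N$. *)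

(* Defs.v *)
From mathcomp Require Import all_boot all_fingroup all_algebra.
Set Implicit Arguments. Unset Strict Implicit. Unset Printing Implicit Defensive.
Import GRing.Theory.
Local Open Scope ring_scope.

(* Finite-dimensional k-algebras presented by a basis (a finite index type I)
   and structure constants: elements are coefficient vectors {ffun I -> k}.
   [alg_iso mulA oneA mulB oneB phi] : phi is a k-algebra isomorphism. *)
Definition alg_iso (k : fieldType) (I J : finType)
    (mulA : {ffun I -> k} -> {ffun I -> k} -> {ffun I -> k}) (oneA : {ffun I -> k})
    (mulB : {ffun J -> k} -> {ffun J -> k} -> {ffun J -> k}) (oneB : {ffun J -> k})
    (phi : {ffun I -> k} -> {ffun J -> k}) : Prop :=
  [/\ (forall (c : k) (a b : {ffun I -> k}), phi [ffun i => c * a i + b i] = [ffun j => c * phi a j + phi b j]),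
      bijective phi,
      (forall a b, phi (mulA a b) = mulB (phi a) (phi b)) &
      phi oneA = oneB].

Definition alg_isomorphic (k : fieldType) (I J : finType)
    (mulA : {ffun I -> k} -> {ffun I -> k} -> {ffun I -> k}) (oneA : {ffun I -> k})
    (mulB : {ffun J -> k} -> {ffun J -> k} -> {ffun J -> k}) (oneB : {ffun J -> k}) : Prop :=
  exists phi, alg_iso mulA oneA mulB oneB phi.

Definition galg_mul (k : fieldType) (K : finGroupType) (a b : {ffun K -> k}) : {ffun K -> k} :=
  [ffun g => \sum_(x : K) a x * b ((x^-1) * g)%g].
Definition galg_one (k : fieldType) (K : finGroupType) : {ffun K -> k} :=
  [ffun g => (g == 1%g)%:R].

(* Factorized group (G, L, F): for l in L, f in F, write l f = (^[l]f)(l^[f])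
   with ^[l]f in F and l^[f] in L.  [fact_right L F l f] is l^[f]
   (well defined when L :&: F = 1 and G = L * F). *)
Definition fact_right (gT : finGroupType) (L F : {group gT})
    (l : subg_of L) (f : subg_of F) : subg_of L :=
  odflt l [pick l' : subg_of L | ((sgval l * sgval f) * (sgval l')^-1)%g \in F].

(* Bismash product k^L # kF: basis l # f (l in L, f in F), with
   (l # f)(l' # f') = delta_{l^[f], l'} l # (f f'), unit sum_l l # 1. *)
Definition bismash_mul (k : fieldType) (gT : finGroupType) (L F : {group gT})
    (a b : {ffun (subg_of L * subg_of F)%type -> k}) : {ffun (subg_of L * subg_of F)%type -> k} :=
  [ffun p => \sum_(f : subg_of F) \sum_(f' : subg_of F)
       if (f * f')%g == p.2 then a (p.1, f) * b (fact_right p.1 f, f') else 0].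
Definition bismash_one (k : fieldType) (gT : finGroupType) (L F : {group gT})
    : {ffun (subg_of L * subg_of F)%type -> k} :=
  [ffun p => (p.2 == 1%g)%:R].

(* Main.v *)
Require Import Defs.
From mathcomp Require Import all_boot all_fingroup all_algebra all_solvable all_field.
From mathcomp Require Import ring.
Local Open Scope ring_scope.
Import GRing.Theory.
Lemma card_subgE (gT : finGroupType) (H : {group gT}) : #|subg_of H| = (#|H|.-1).+1.
Proof. by rewrite card_sub prednK // cardG_gt0. Qed.

Section FR.
Local Open Scope group_scope.
Lemma fact_rightE (gT : finGroupType) (G H N : {group gT}) :
  (N ><| H)%g = G -> forall l f, @fact_right gT H N l f = l.
Proof.
move=> /sdprodP [_ _ nNH tI] l f; rewrite /fact_right.
have hl : sgval l * sgval f * (sgval l)^-1 \in N.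
  have := subgP l => lH.
  have -> : sgval l * sgval f * (sgval l)^-1 = sgval f ^ (sgval l)^-1.
    by rewrite /conjg invgK mulgA.
  by rewrite memJ_norm ?subgP // groupV (subsetP nNH).
case: pickP => [l' hl'|/(_ l)]; last by rewrite hl.
apply: val_inj => /=.
have : ((sgval l * sgval f * (sgval l)^-1)^-1 * (sgval l * sgval f * (sgval l')^-1) \in N)%g.
  by rewrite groupM ?groupV.
rewrite !invMg invgK -!mulgA mulKg (mulgA (sgval f)^-1) mulVg mul1g => hN.
have hH : ((sgval l * (sgval l')^-1) \in H)%g by rewrite groupM ?groupV ?subgP.
have : (sgval l * (sgval l')^-1 \in N :&: H)%g by rewrite inE hN.
rewrite tI inE => /eqP/eqP; rewrite -eq_mulgV1 => /eqP ->.
done.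
Qed.
End FR.

Lemma prim_root_exists_closed (k : closedFieldType) (n : nat) :
  (n%:R != 0 :> k) -> (n > 0)%N -> exists z : k, n.-primitive_root z.
Proof.
move=> nz n_gt0.
pose p : {poly k} := 'X^n - 1; have [r Dp] := closed_field_poly_normal p.
rewrite (monicP _) ?monicXnsubC // scale1r in Dp.
have rn1: all n.-unity_root r by apply/allP=> z; rewrite -root_prod_XsubC -Dp.
have sz_r: (n < (size r).+1)%N.
  by rewrite -(size_prod_XsubC r id) -Dp size_XnsubC.
have [|z] := hasP (has_prim_root n_gt0 rn1 _ sz_r); last by exists z.
by rewrite -separable_prod_XsubC -Dp separable_Xn_sub_1.
Qed.

Lemma geom_sum_root (k : fieldType) (n : nat) (x : k) :
  x ^+ n = 1 -> \sum_(i < n) x ^+ i = if x == 1 then n%:R else 0.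
Proof.
move=> xn; case: eqP => [->|/eqP x1].
  by rewrite (eq_bigr (fun _ => 1)) ?sumr_const ?card_ord // => i _; rewrite expr1n.
have := subrX1 x n; rewrite xn subrr => /esym/eqP.
by rewrite mulf_eq0 subr_eq0 (negPf x1) => /eqP.
Qed.
Section Main.
Variables (k : fieldType) (gT : finGroupType) (H N : {group gT}) (n : nat) (w : k).
Hypothesis prim : n.+1.-primitive_root w.
Hypothesis nz : n.+1%:R != 0 :> k.
Variable r : subg_of H -> 'I_n.+1.
Hypothesis rbij : bijective r.
Hypothesis FR : forall l f, @fact_right gT H N l f = l.

Local Notation I := ('I_n.+1 * subg_of N)%type.
Local Notation J := (subg_of H * subg_of N)%type.
Definition zeta (l : subg_of H) := w ^+ r l.

Definition psi (b : {ffun I -> k}) : {ffun J -> k} :=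
  [ffun p => \sum_(j : 'I_n.+1) zeta p.1 ^+ j * b (j, p.2)].

Lemma zetaD l (j1 j2 : 'I_n.+1) : zeta l ^+ (val (j1 * j2)%g) = zeta l ^+ j1 * zeta l ^+ j2.
Proof.
rewrite /= expr_mod -?exprD //.
by rewrite /zeta -exprM mulnC exprM (prim_expr_order prim) expr1n.
Qed.

Lemma galgE (b c : {ffun I -> k}) (p : I) :
  @galg_mul k ('I_n.+1 * subg_of N)%type b c p =
  \sum_(j : 'I_n.+1) \sum_(m : subg_of N) b (j, m) * c ((j, m)^-1 * p)%g.
Proof.
rewrite ffunE (eq_bigr (fun x => (fun j m => b (j, m) * c ((j, m)^-1 * p)%g) x.1 x.2)); last by case.
exact: (esym (pair_bigA _ (fun j m => b (j, m) * c ((j, m)^-1 * p)%g))).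
Qed.
Lemma psiM b c : psi (galg_mul b c) = bismash_mul (psi b) (psi c).
Proof.
apply/ffunP => [[l f]]; rewrite ffunE /= ffunE /=.
under eq_bigr => j _ do rewrite galgE mulr_sumr.
under eq_bigr => j _ do under eq_bigr => i _ do rewrite mulr_sumr.
rewrite exchange_big /=.
under eq_bigr => j1 _ do rewrite exchange_big /=.
rewrite exchange_big /=; apply: eq_bigr => f1 _.
rewrite [RHS](bigD1 (f1^-1 * f)%g) //=. rewrite (mulKVg f1). rewrite eqxx [X in _ + X]big1 ?addr0; last first.
  move=> f2 hf; case: ifP => // /eqP hf'; move: hf; rewrite -hf' mulKg eqxx //.
rewrite !FR !ffunE /= big_distrl /=; apply: eq_bigr => j1 _.
rewrite (reindex_inj (mulgI j1)) /= big_distrr /=; apply: eq_bigr => j2 _.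
have -> : ((j1, f1)^-1 * ((j1 * j2)%g, f))%g = (j2, (f1^-1 * f)%g).
  change (((j1^-1 * (j1 * j2))%g, (f1^-1 * f)%g) = (j2, (f1^-1 * f)%g)).
  by rewrite mulKg.
rewrite zetaD; ring.
Qed.

Lemma w_root : w ^+ n.+1 = 1. Proof. exact: prim_expr_order prim. Qed.
Lemma w_neq0 : w != 0.
Proof. apply/eqP => w0; have := w_root; rewrite w0 expr0n /= => /eqP; rewrite eq_sym oner_eq0. done. Qed.
Lemma zeta_neq0 l : zeta l != 0. Proof. by rewrite expf_neq0 // w_neq0. Qed.
Lemma root_pow (x : k) (i : nat) : x ^+ n.+1 = 1 -> (x ^+ i) ^+ n.+1 = 1.
Proof. by move=> h; rewrite -exprM mulnC exprM h expr1n. Qed.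
Lemma div_eq1 (y z : k) : z != 0 -> (y / z == 1) = (y == z).
Proof. by move=> nz0; rewrite -(inj_eq (mulIf nz0)) divfK // mul1r. Qed.
Lemma wexp_eq (i j : 'I_n.+1) : (w ^+ i == w ^+ j) = (i == j).
Proof. by rewrite (eq_prim_root_expr prim) !modn_small. Qed.
Lemma zeta_eq l l' : (zeta l == zeta l') = (l == l').
Proof. by rewrite /zeta wexp_eq (inj_eq (bij_inj rbij)). Qed.

Lemma O1 (j j' : 'I_n.+1) :
  \sum_(l : subg_of H) (zeta l)^-1 ^+ j * zeta l ^+ j' = if j' == j then n.+1%:R else 0.
Proof.
rewrite -wexp_eq -(div_eq1 (w ^+ j') (w ^+ j) (expf_neq0 _ w_neq0)).
rewrite -geom_sum_root; last first.
  by rewrite exprMn exprVn !root_pow ?w_root // invr1 mulr1.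
rewrite (reindex r) /=; last exact: onW_bij.
apply: eq_bigr => l _; rewrite /zeta exprMn exprVn -!exprM exprVn -exprM.
by rewrite mulrC (mulnC j') (mulnC j).
Qed.

Lemma O2 (l l' : subg_of H) :
  \sum_(j : 'I_n.+1) zeta l ^+ j * (zeta l')^-1 ^+ j = if l == l' then n.+1%:R else 0.
Proof.
rewrite -zeta_eq -(div_eq1 (zeta l) (zeta l') (zeta_neq0 l')).
rewrite -geom_sum_root; last first.
  by rewrite exprMn exprVn !root_pow ?w_root // invr1 mulr1.
by apply: eq_bigr => j _; rewrite exprMn.
Qed.

Definition phi (a : {ffun J -> k}) : {ffun I -> k} :=
  [ffun q : I => (n.+1%:R)^-1 * \sum_(l : subg_of H) (zeta l)^-1 ^+ q.1 * a (l, q.2)].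

Lemma phi_psi : cancel psi phi.
Proof.
move=> b; apply/ffunP => [[j f]]; rewrite ffunE /=.
under eq_bigr => l _ do rewrite ffunE /= mulr_sumr.
rewrite exchange_big /=.
rewrite (eq_bigr (fun j' => b (j', f) * (if j' == j then n.+1%:R else 0))); last first.
  move=> j' _; rewrite -O1 mulr_sumr; apply: eq_bigr => l _; ring.
rewrite (bigD1 j) //= eqxx [X in _ + X]big1 ?addr0; last first.
  by move=> j' /negPf ->; rewrite mulr0.
by rewrite mulrC mulfK.
Qed.

Lemma psi_phi : cancel phi psi.
Proof.
move=> a; apply/ffunP => [[l f]]; rewrite ffunE /=.
under eq_bigr => j _ do rewrite ffunE /= mulr_sumr mulr_sumr.
rewrite exchange_big /=.
rewrite (eq_bigr (fun l' => (n.+1%:R)^-1 * a (l', f) * (if l == l' then n.+1%:R else 0))); last first.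
  move=> l' _; rewrite -O2 mulr_sumr; apply: eq_bigr => j _ /=; ring.
rewrite (bigD1 l) //= eqxx [X in _ + X]big1 ?addr0; last first.
  by move=> l' /negPf; rewrite eq_sym => ->; rewrite mulr0.
by rewrite mulrC mulrA mulfV // mul1r.
Qed.

Lemma phiM a b : phi (bismash_mul a b) = galg_mul (phi a) (phi b).
Proof.
by rewrite -{1}(psi_phi a) -{1}(psi_phi b) -psiM phi_psi.
Qed.

Lemma psi1 : psi (galg_one k _) = bismash_one k H N.
Proof.
apply/ffunP => [[l f]]; rewrite !ffunE /=.
rewrite (bigD1 ord0) //= ffunE /= [X in _ + X]big1 ?addr0; last first.
  move=> j /negPf hj; rewrite ffunE /=.
  have -> : ((j, f) == 1)%g = false.
    by apply/negbTE/negP => /eqP [] /eqP; rewrite hj.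
  by rewrite mulr0.
rewrite expr0 mul1r.
have -> : ((ord0, f) == 1 :> ('I_n.+1 * subg_of N)%type)%g = (f == 1)%g by [].
done.
Qed.

Lemma phi1 : phi (bismash_one k H N) = galg_one k _.
Proof. by rewrite -psi1 phi_psi. Qed.

Lemma phi_lin (c : k) (a b : {ffun J -> k}) :
  phi [ffun i => c * a i + b i] = [ffun j => c * phi a j + phi b j].
Proof.
apply/ffunP => q; rewrite !ffunE /=.
rewrite mulrA (mulrC c) -mulrA -mulrDr; congr (_ * _).
rewrite mulr_sumr -big_split /=; apply: eq_bigr => l _; rewrite ffunE; ring.
Qed.
End Main.

Theorem mainTheorem12 (k : closedFieldType) (hk : [pchar k] =i pred0)
    (gT : finGroupType) (G H N : {group gT}) (hG : (N ><| H)%g = G) :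
  alg_isomorphic
    (@bismash_mul k gT H N) (@bismash_one k gT H N)
    (@galg_mul k ('I_(#|H|.-1).+1 * subg_of N)%type)
    (@galg_one k ('I_(#|H|.-1).+1 * subg_of N)%type).
Proof.
have nz : (#|H|.-1).+1%:R != 0 :> k by rewrite (pcharf0P _).1.
have [w prim] := @prim_root_exists_closed k _ nz (ltn0Sn _).
pose E := @card_subgE gT H.
pose r (l : subg_of H) : 'I_(#|H|.-1).+1 := cast_ord E (enum_rank l).
have rbij : bijective r.
  exists (fun i => enum_val (cast_ord (esym E) i)).
    by move=> l; rewrite /r cast_ordK enum_rankK.
  by move=> i; rewrite /r enum_valK cast_ordKV.
have FR := @fact_rightE gT G H N hG.
exists (@phi k gT H N _ w r); split.
- exact: phi_lin.
- exists (@psi k gT H N _ w r).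
  + exact: (@psi_phi k gT H N _ w prim nz r rbij).
  + exact: (@phi_psi k gT H N _ w prim nz r rbij).
- exact: (@phiM k gT H N _ w prim nz r rbij FR).
- exact: (@phi1 k gT H N _ w prim nz r rbij).
Qed.
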